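(* Among the $q-1$ $T$-sls-pencils there is exactly one Type-II-$T$-sls-pencil and there are $q-2$ Type-III-$T$-sls-pencils. Moreover: (1) if $q$ is even, the Type-II-$T$-sls-pencil meets the line $m_T$ in a Type-II-$T$-sls, and each Type-III-$T$-sls-pencil meets $m_T$ in a Type-III-$T$-sls; (2) if $q$ is odd, the Type-II-$T$-sls-pencil meets $m_T$ in a Type-III-$T$-sls, one Type-III-$T$-sls-pencil meets $m_T$ in a Type-II-$T$-sls, and the remaining $q-3$ Type-III-$T$-sls-pencils meet $m_T$ in Type-III-$T$-slses.
   Context: Let $q$ be a prime power, $\mathbb{F}_{q^3}^*=\mathbb{F}_{q^3}\setminus\{0\}$. Points of $\mathrm{PG}(2,q^3)$ have homogeneous coordinates $(x,y,z)$ and lines $[a,b,c]$. Let $\phi$ be the collineation $(x,y,z)\mapsto(z^q,x^q,y^q)$, acting on lines by $[d,e,f]\mapsto[f^q,d^q,e^q]$; its fixed points form the subplane $\mathcal P_{2,q}=\{(x,x^q,x^{q^2}):x\in\mathbb{F}_{q^3}^*\}$. A point has Type I, II or III according as its $\phi$-orbit is one point, three collinear points, or three non-collinear points; a line has Type I, II or III according as its $\phi$-orbit is one line, three concurrent lines, or three non-concurrent lines. Let $T=(0,0,1)$, $T^\phi=(1,0,0)$, $T^{\phi^2}=(0,1,0)$ and $m_T=T^\phi T^{\phi^2}$ the line $[0,0,1]$. Let $\mathsf S_T=\{\psi_t:t\in\mathbb{F}_{q^3}^*\}$ where $\psi_t:(x,y,z)\mapsto(tx,t^qy,t^{q^2}z)$.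 A $T$-sls is a point orbit of $\mathsf S_T$ of size $q^2+q+1$ contained in $m_T$ (there are $q-1$ of them, namely the sets $\{(x\theta,x^q,0):x\in\mathbb{F}_{q^3}^*\}$, $\theta\in\mathbb{F}_{q^3}^*$); it is Type-X if all its points have Type X. For a $T$-sls $\mathcal S$, the pencil $T\mathcal S=\{TX:X\in\mathcal S\}$ is a $T$-sls-pencil (it meets $m_T$ in $\mathcal S$); it is called Type-X if all its lines have Type X. *)

(* Defs.v *)
From mathcomp Require Import all_boot all_order all_algebra all_field.
Set Implicit Arguments. Unset Strict Implicit. Unset Printing Implicit Defensive.
Import GRing.Theory.
Local Open Scope ring_scope.

Section PG.
Variable F : finFieldType.

(* homogeneous coordinate vectors (x,y,z) = ((x,y),z) *)
Definition vec := (F * F * F)%type.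
Definition vzero : vec := (0, 0, 0).

Definition scalev (a : F) (v : vec) : vec := (a * v.1.1, a * v.1.2, a * v.2).

(* the projective point (or line) with coordinate vector v: the set of all
   nonzero scalar multiples of v *)
Definition pt (v : vec) : {set vec} := [set scalev a v | a : F & a != 0].

Definition is_pt (P : {set vec}) : bool :=
  [exists v : vec, (v != vzero) && (P == pt v)].
Definition is_line := is_pt.

Definition dot (v w : vec) : F := v.1.1 * w.1.1 + v.1.2 * w.1.2 + v.2 * w.2.

Definition incident (P L : {set vec}) : bool :=
  [exists v in P, exists w in L, dot v w == 0].

(* the collineation phi : (x,y,z) |-> (z^q, x^q, y^q); on lines the same
   formula [d,e,f] |-> [f^q, d^q, e^q] *)
Definition phiv (q : nat) (v : vec) : vec := (v.2 ^+ q, v.1.1 ^+ q, v.1.2 ^+ q).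
Definition phis (q : nat) (P : {set vec}) : {set vec} := [set phiv q v | v in P].

(* phi-orbit (phi^3 = id on PG(2,q^3)) *)
Definition phi_orbit (q : nat) (P : {set vec}) : {set {set vec}} :=
  [set P; phis q P; phis q (phis q P)].

Definition collinear3 (P Q R : {set vec}) : bool :=
  [exists L : {set vec}, [&& is_line L, incident P L, incident Q L & incident R L]].
Definition concurrent3 (L M N : {set vec}) : bool :=
  [exists P : {set vec}, [&& is_pt P, incident P L, incident P M & incident P N]].

Definition typeI_pt q P := #|phi_orbit q P| == 1%N.
Definition typeII_pt q P :=
  (#|phi_orbit q P| == 3%N) && collinear3 P (phis q P) (phis q (phis q P)).
Definition typeIII_pt q P :=
  (#|phi_orbit q P| == 3%N) && ~~ collinear3 P (phis q P) (phis q (phis q P)).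

Definition typeI_line q L := #|phi_orbit q L| == 1%N.
Definition typeII_line q L :=
  (#|phi_orbit q L| == 3%N) && concurrent3 L (phis q L) (phis q (phis q L)).
Definition typeIII_line q L :=
  (#|phi_orbit q L| == 3%N) && ~~ concurrent3 L (phis q L) (phis q (phis q L)).

Definition T : {set vec} := pt (0, 0, 1).
Definition mT : {set vec} := pt (0, 0, 1).        (* line [0,0,1] = T^phi T^phi^2 *)

Definition psiv (q : nat) (t : F) (v : vec) : vec :=
  (t * v.1.1, t ^+ q * v.1.2, t ^+ (q ^ 2) * v.2).

(* the orbit of the point P under the group S_T *)
Definition ST_orbit (q : nat) (P : {set vec}) : {set {set vec}} :=
  [set [set psiv q t v | v in P] | t : F & t != 0].

Definition Tsls (q : nat) : {set {set {set vec}}} :=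
  [set O : {set {set vec}} |
     [exists P : {set vec}, is_pt P && (O == ST_orbit q P)]
     && (#|O| == (q ^ 2 + q + 1)%N) && [forall X in O, incident X mT]].

(* the T-sls-pencil TS = { TX : X in S } *)
Definition Tpencil (S : {set {set vec}}) : {set {set vec}} :=
  [set L : {set vec} | [&& is_line L, incident T L & [exists X in S, incident X L]]].

Definition typeII_sls q (S : {set {set vec}}) := [forall X in S, typeII_pt q X].
Definition typeIII_sls q (S : {set {set vec}}) := [forall X in S, typeIII_pt q X].
Definition typeII_pencil q (Pc : {set {set vec}}) := [forall L in Pc, typeII_line q L].
Definition typeIII_pencil q (Pc : {set {set vec}}) := [forall L in Pc, typeIII_line q L].

End PG.

(* Main.v *)
Require Import Defs.
From mathcomp Require Import all_boot all_order all_algebra all_field ring zify.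
Set Implicit Arguments. Unset Strict Implicit. Unset Printing Implicit Defensive.
Import GRing.Theory.
Lemma prod_eq a b m n : 0 < m -> 0 < n -> a <= m -> b <= n -> m * n = a * b -> a = m /\ b = n.
Proof.
move=> m0 n0 am bn e.
have ea : a = m.
  apply/eqP; rewrite eqn_leq am /=; rewrite leqNgt; apply/negP => lt.
  have : a * b < m * n by apply: (leq_ltn_trans (leq_mul (leqnn a) bn)); rewrite ltn_pmul2r.
  by rewrite e ltnn.
split=> //; subst a; apply/eqP; rewrite -(eqn_pmul2l m0) e.
by [].
Qed.

Local Open Scope ring_scope.

Section Basic.
Variable F : finFieldType.

Lemma mem_pt (v w : vec F) : (w \in pt v) = [exists a : F, (a != 0) && (w == scalev a v)].
Proof.
apply/imsetP/existsP => [[a] | [a /andP[a0 /eqP ->]]].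
  by rewrite inE => a0 ->; exists a; rewrite a0 eqxx.
by exists a; rewrite ?inE.
Qed.

Lemma scalev1 (v : vec F) : scalev 1 v = v.
Proof. by case: v => [[x y] z]; rewrite /scalev /= !mul1r. Qed.

Lemma scalevA a b (v : vec F) : scalev a (scalev b v) = scalev (a * b) v.
Proof. by case: v => [[x y] z]; rewrite /scalev /= !mulrA. Qed.

Lemma pt_self (v : vec F) : v \in pt v.
Proof. by rewrite mem_pt; apply/existsP; exists 1; rewrite oner_neq0 scalev1 eqxx. Qed.

Lemma pt_scale a (v : vec F) : a != 0 -> pt (scalev a v) = pt v.
Proof.
move=> a0; apply/setP => w; rewrite !mem_pt; apply/existsP/existsP.
  case=> b /andP[b0 /eqP ->]; exists (b * a); rewrite mulf_neq0 //= scalevA //.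
case=> b /andP[b0 /eqP ->]; exists (b / a); rewrite mulf_neq0 ?invr_eq0 //=.
by rewrite scalevA divfK.
Qed.

Lemma pt_eq (v w : vec F) : pt v = pt w -> exists2 a : F, a != 0 & w = scalev a v.
Proof.
move=> e; have := pt_self w; rewrite -e mem_pt => /existsP[a /andP[a0 /eqP ->]].
by exists a.
Qed.

Lemma dot_scale a b (v w : vec F) : dot (scalev a v) (scalev b w) = a * b * dot v w.
Proof.
case: v => [[x y] z]; case: w => [[x' y'] z']; rewrite /dot /scalev /=.
rewrite !mulrDr; congr (_ + _ + _); rewrite -!mulrA; congr (_ * _); rewrite !mulrA; congr (_ * _); by rewrite mulrC.
Qed.

Lemma incident_pt (v w : vec F) : incident (pt v) (pt w) = (dot v w == 0).
Proof.
apply/existsP/idP => [[v' /andP[]] | h].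
  rewrite mem_pt => /existsP[a /andP[a0 /eqP ->]] /existsP[w' /andP[]].
  rewrite mem_pt => /existsP[b /andP[b0 /eqP ->]].
  by rewrite dot_scale !mulf_eq0 (negbTE a0) (negbTE b0).
by exists v; rewrite pt_self; apply/existsP; exists w; rewrite pt_self.
Qed.

Lemma is_ptP (P : {set vec F}) : reflect (exists2 v, v != vzero F & P = pt v) (is_pt P).
Proof.
apply: (iffP existsP) => [[v /andP[v0 /eqP ->]] | [v v0 ->]]; first by exists v.
by exists v; rewrite v0 eqxx.
Qed.

Lemma phiv_scale q a (v : vec F) : phiv q (scalev a v) = scalev (a ^+ q) (phiv q v).
Proof. by case: v => [[x y] z]; rewrite /phiv /scalev /= !exprMn. Qed.

End Basic.

Section Q.
Variable F : finFieldType.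
Variable q : nat.
Hypothesis hF : #|F| = (q ^ 3)%N.
Hypothesis q_gt1 : (1 < q)%N.
Hypothesis hm1 : (-1 : F) ^+ q = -1.

Lemma frobK (b : F) : (b ^+ (q ^ 2)) ^+ q = b.
Proof. by rewrite -exprM -expnSr -hF expf_card. Qed.

Lemma phis_pt (v : vec F) : phis q (pt v) = pt (phiv q v).
Proof.
apply/setP => w; apply/imsetP/idP.
  case=> x; rewrite mem_pt => /existsP[a /andP[a0 /eqP ->]] ->.
  rewrite phiv_scale mem_pt; apply/existsP; exists (a ^+ q).
  by rewrite expf_neq0 ?eqxx.
rewrite mem_pt => /existsP[b /andP[b0 /eqP ->]].
exists (scalev (b ^+ (q ^ 2)) v); last by rewrite phiv_scale frobK.
by rewrite mem_pt; apply/existsP; exists (b ^+ (q ^ 2)); rewrite expf_neq0 ?eqxx.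
Qed.

Lemma psiv_scale t a (v : vec F) : psiv q t (scalev a v) = scalev a (psiv q t v).
Proof.
case: v => [[x y] z]; rewrite /psiv /scalev /=.
by rewrite !mulrA [t * a]mulrC [t ^+ q * a]mulrC [t ^+ (q ^ 2) * a]mulrC.
Qed.

Lemma psis_pt t (v : vec F) : [set psiv q t w | w in pt v] = pt (psiv q t v).
Proof.
apply/setP => w; apply/imsetP/idP.
  case=> x; rewrite mem_pt => /existsP[a /andP[a0 /eqP ->]] ->.
  by rewrite psiv_scale mem_pt; apply/existsP; exists a; rewrite a0 eqxx.
rewrite mem_pt => /existsP[b /andP[b0 /eqP ->]].
exists (scalev b v); last by rewrite psiv_scale.
by rewrite mem_pt; apply/existsP; exists b; rewrite b0 eqxx.
Qed.

Definition Xp (r : F) : {set vec F} := pt (r, 1, 0).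
Definition Yl (s : F) : {set vec F} := pt (1, - s, 0).
Definition Nm (s : F) : F := s * s ^+ q * s ^+ (q ^ 2).

Lemma exp0q : (0 : F) ^+ q = 0.
Proof. by rewrite expr0n; case: q q_gt1. Qed.

Lemma expqq (s : F) : (s ^+ q) ^+ q = s ^+ (q ^ 2).
Proof. by rewrite -exprM mulnn. Qed.

Lemma expNq (s : F) : (- s) ^+ q = - s ^+ q.
Proof. by rewrite -mulN1r exprMn hm1 mulN1r. Qed.

Lemma card3 (T : finType) (A B C : T) : A != B -> A != C -> B != C -> #|[set A; B; C]| = 3%N.
Proof.
move=> ab ac bc.
have -> : [set A; B; C] = A |: (B |: [set C]) by apply/setP => x; rewrite !inE ?orbA.
by rewrite !cardsU1 cards1 !inE negb_or ab ac /= bc.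
Qed.

Lemma collinearP (u v w : vec F) :
  reflect (exists l : vec F, [&& l != vzero F, dot u l == 0, dot v l == 0 & dot w l == 0])
          (collinear3 (pt u) (pt v) (pt w)).
Proof.
apply: (iffP existsP) => [[L /and4P[/is_ptP[l l0 ->]]] | [l /and4P[l0 h1 h2 h3]]].
  by rewrite !incident_pt => h1 h2 h3; exists l; rewrite l0 h1 h2 h3.
exists (pt l); rewrite !incident_pt h1 h2 h3 !andbT; apply/is_ptP; by exists l.
Qed.

Lemma concurrentP (u v w : vec F) :
  reflect (exists l : vec F, [&& l != vzero F, dot l u == 0, dot l v == 0 & dot l w == 0])
          (concurrent3 (pt u) (pt v) (pt w)).
Proof.
apply: (iffP existsP) => [[L /and4P[/is_ptP[l l0 ->]]] | [l /and4P[l0 h1 h2 h3]]].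
  by rewrite !incident_pt => h1 h2 h3; exists l; rewrite l0 h1 h2 h3.
exists (pt l); rewrite !incident_pt h1 h2 h3 !andbT; apply/is_ptP; by exists l.
Qed.

Lemma phiX1 s : phis q (Xp s) = pt (0, s ^+ q, 1).
Proof. by rewrite /Xp phis_pt /phiv /= exp0q expr1n. Qed.
Lemma phiX2 s : phis q (phis q (Xp s)) = pt (1, 0, s ^+ (q ^ 2)).
Proof. by rewrite phiX1 phis_pt /phiv /= exp0q expr1n expqq. Qed.
Lemma phiY1 s : phis q (Yl s) = pt (0, 1, - s ^+ q).
Proof. by rewrite /Yl phis_pt /phiv /= exp0q expr1n expNq. Qed.
Lemma phiY2 s : phis q (phis q (Yl s)) = pt (- s ^+ (q ^ 2), 0, 1).
Proof. by rewrite phiY1 phis_pt /phiv /= exp0q expr1n expNq expqq. Qed.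

Lemma pt_neq (f : vec F -> F) (hf : forall a v, f (scalev a v) = a * f v) (v w : vec F) :
  (f v == 0) != (f w == 0) -> pt v != pt w.
Proof.
apply: contra => /eqP /pt_eq [a a0 ->].
by rewrite hf mulf_eq0 (negbTE a0).
Qed.

Lemma hx a (v : vec F) : (scalev a v).1.1 = a * v.1.1. Proof. by []. Qed.
Lemma hy a (v : vec F) : (scalev a v).1.2 = a * v.1.2. Proof. by []. Qed.
Lemma hz a (v : vec F) : (scalev a v).2 = a * v.2. Proof. by []. Qed.

Lemma orbX s : #|phi_orbit q (Xp s)| = 3%N.
Proof.
rewrite /phi_orbit phiX2 phiX1 /Xp card3 //.
- by apply: (pt_neq hz); rewrite /= eqxx oner_eq0.
- by apply: (pt_neq hy); rewrite /= eqxx oner_eq0.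
- by apply: (pt_neq hx); rewrite /= eqxx oner_eq0.
Qed.

Lemma orbY s : #|phi_orbit q (Yl s)| = 3%N.
Proof.
rewrite /phi_orbit phiY2 phiY1 /Yl card3 //.
- by apply: (pt_neq hx); rewrite /= eqxx oner_eq0.
- by apply: (pt_neq hz); rewrite /= eqxx oner_eq0.
- by apply: (pt_neq hy); rewrite /= eqxx oner_eq0.
Qed.

Lemma collX s : collinear3 (Xp s) (phis q (Xp s)) (phis q (phis q (Xp s))) = (Nm s == -1).
Proof.
rewrite phiX2 phiX1 /Xp; apply/collinearP/idP.
  case=> [[[a b] c]] /and4P[nz e1 e2 e3]; rewrite /dot /= in e1 e2 e3.
  apply/negPn/negP => hN; move: nz; apply/negP; rewrite negbK.
  move: e1 e2 e3; rewrite !mul0r !mul1r !addr0 !add0r => e1 e2 e3.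
  have hb : b = - (s * a) by apply/eqP; rewrite -addr_eq0 addrC.
  have hc : c = s ^+ q * s * a by apply/eqP; rewrite -subr_eq0 -(eqP e2) hb; apply/eqP; ring.
  have : a * (1 + Nm s) == 0 by rewrite -(eqP e3) hc /Nm; apply/eqP; ring.
  rewrite mulf_eq0 addr_eq0 => /orP[/eqP a0|]; last by rewrite eq_sym eqr_oppLR (negbTE hN).
  by rewrite hc hb a0 !mulr0 oppr0.
move=> /eqP hN; exists (1, - s, s ^+ q * s); rewrite /dot /=.
apply/and4P; split.
- by apply/eqP => -[] /eqP; rewrite oner_eq0.
- by rewrite mul0r addr0 mulr1 mul1r addrN.
- by rewrite mul0r add0r mul1r mulrN addNr.
- by apply/eqP; rewrite mul0r addr0 mul1r; rewrite -[1](opprK 1) -hN /Nm; ring.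
Qed.

Lemma concY s : concurrent3 (Yl s) (phis q (Yl s)) (phis q (phis q (Yl s))) = (Nm s == 1).
Proof.
rewrite phiY2 phiY1 /Yl; apply/concurrentP/idP.
  case=> [[[x y] z]] /and4P[nz e1 e2 e3]; rewrite /dot /= in e1 e2 e3.
  apply/negPn/negP => hN; move: nz; apply/negP; rewrite negbK.
  move: e1 e2 e3; rewrite !mulr0 !mulr1 !addr0 !add0r => e1 e2 e3.
  have hx : x = s * y by apply/eqP; rewrite -subr_eq0 -(eqP e1); apply/eqP; ring.
  have hy : y = s ^+ q * z by apply/eqP; rewrite -subr_eq0 -(eqP e2); apply/eqP; ring.
  have : z * (1 - Nm s) == 0 by rewrite -(eqP e3) hx hy /Nm; apply/eqP; ring.
  rewrite mulf_eq0 subr_eq0 => /orP[/eqP z0|]; last by rewrite eq_sym (negbTE hN).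
  by rewrite hx hy z0 !mulr0.
move=> /eqP hN; exists (s * s ^+ q, s ^+ q, 1); rewrite /dot /=.
apply/and4P; split.
- by apply/eqP => -[] _ _ /eqP; rewrite oner_eq0.
- by apply/eqP; ring.
- by apply/eqP; ring.
- apply/eqP; transitivity (1 - Nm s); first by rewrite /Nm; ring.
  by rewrite hN subrr.
Qed.

Lemma typeX s : typeII_pt q (Xp s) = (Nm s == -1) /\ typeIII_pt q (Xp s) = (Nm s != -1).
Proof. by rewrite /typeII_pt /typeIII_pt orbX collX. Qed.

Lemma typeY s : typeII_line q (Yl s) = (Nm s == 1) /\ typeIII_line q (Yl s) = (Nm s != 1).
Proof. by rewrite /typeII_line /typeIII_line orbY concY. Qed.


Definition U : {set F} := [set~ 0].

Lemma fiber (f : F -> F) (fM : {morph f : x y / x * y}) (fU : forall x, x != 0 -> f x != 0)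
  x0 : x0 != 0 -> [set x in U | f x == f x0] = [set x0 * k | k in [set x in U | f x == 1]].
Proof.
move=> x00; apply/setP => x; rewrite inE in_setC1; apply/andP/imsetP.
  case=> x0' /eqP e; exists (x / x0); last by rewrite mulrC divfK.
  rewrite inE in_setC1 mulf_neq0 ?invr_eq0 //=.
  apply/eqP; apply: (mulIf (fU _ x00)); rewrite -fM divfK // mul1r e //.
case=> k; rewrite inE in_setC1 => /andP[k0 /eqP k1] ->.
by rewrite mulf_neq0 // fM k1 mulr1.
Qed.

Lemma hom_count (f : F -> F) (fM : {morph f : x y / x * y}) (fU : forall x, x != 0 -> f x != 0) :
  #|U| = (#|f @: U| * #|[set x in U | f x == 1%R]|)%N.
Proof.
rewrite -sum1_card (partition_big_imset f) /= -sum_nat_const.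
apply: eq_bigr => y /imsetP[x0 x0U ->].
rewrite sum1dep_card.
have -> : [set x | (x \in U) && (f x == f x0)] = [set x in U | f x == f x0] by [].
rewrite fiber //; last by rewrite in_setC1 in x0U.
by rewrite card_imset //; apply: mulfI; rewrite in_setC1 in x0U.
Qed.

Lemma card_roots m : (0 < m)%N -> (#|[set x in U | x ^+ m == 1%R]| <= m)%N.
Proof.
move=> m0; apply: leq_trans (_ : #|[set x : F | x ^+ m == 1%R]| <= m)%N.
  by apply: subset_leq_card; apply/subsetP => x; rewrite !inE => /andP[].
rewrite cardE; apply: max_unity_roots => //; last exact: enum_uniq.
by apply/allP => x; rewrite mem_enum inE unity_rootE.
Qed.

Lemma cardU : #|U| = #|F|.-1. Proof. exact: cardsC1. Qed.


Lemma inU (x : F) : (x \in U) = (x != 0). Proof. exact: in_setC1. Qed.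
Definition f2 (t : F) := t / t ^+ q.
Definition KN := [set x in U | Nm x == 1].
Definition ImN := Nm @: U.

Lemma NmE s : Nm s = s ^+ (q ^ 2 + q + 1).
Proof. by rewrite /Nm !exprD expr1; ring. Qed.

Lemma NmM : {morph Nm : x y / x * y}.
Proof. by move=> x y; rewrite /Nm !exprMn; ring. Qed.

Lemma Nm_neq0 x : x != 0 -> Nm x != 0.
Proof. by move=> x0; rewrite /Nm !mulf_neq0 ?expf_neq0. Qed.

Lemma frob3 (t : F) : (t ^+ q) ^+ (q ^ 2) = t.
Proof. by rewrite -exprM -expnS -hF expf_card. Qed.

Lemma NmF t : Nm (t ^+ q) = Nm t.
Proof. by rewrite /Nm expqq frob3; ring. Qed.

Lemma f2M : {morph f2 : x y / x * y}.
Proof. by move=> x y; rewrite /f2 exprMn invfM mulrACA. Qed.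

Lemma f2_neq0 x : x != 0 -> f2 x != 0.
Proof. by move=> x0; rewrite /f2 mulf_neq0 ?invr_eq0 ?expf_neq0. Qed.

Lemma Nm_f2 t : t != 0 -> Nm (f2 t) = 1.
Proof.
move=> t0; apply: (mulIf (Nm_neq0 t0)); rewrite mul1r -{1}(NmF t) -NmM /f2 divfK //.
by rewrite expf_neq0.
Qed.

Lemma q3pos : (0 < q ^ 3)%N. Proof. by rewrite expn_gt0; case: q q_gt1. Qed.

Lemma xpow1 (x : F) : x != 0 -> x ^+ (q ^ 3).-1 = 1.
Proof.
move=> x0; apply: (mulIf x0); rewrite -exprSr prednK ?q3pos // -hF expf_card mul1r //.
Qed.

Lemma arith : ((q ^ 2 + q + 1) * (q - 1) = (q ^ 3).-1)%N.
Proof. have := q_gt1; rewrite !expnS expn0; nia. Qed.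

Lemma cardU3 : #|U| = ((q - 1) * (q ^ 2 + q + 1))%N.
Proof. by rewrite cardU hF -arith mulnC. Qed.

Lemma card_ImN_le : (#|ImN| <= q - 1)%N.
Proof.
apply: leq_trans (card_roots (_ : 0 < q - 1)%N); last by rewrite subn_gt0.
apply: subset_leq_card; apply/subsetP => y /imsetP[x]; rewrite inU => x0 ->.
by rewrite inE inU Nm_neq0 //= NmE -exprM arith xpow1.
Qed.

Lemma card_KN_le : (#|KN| <= q ^ 2 + q + 1)%N.
Proof.
apply: leq_trans (card_roots (_ : 0 < q ^ 2 + q + 1)%N); last by rewrite addn1.
by apply: subset_leq_card; apply/subsetP => y; rewrite !inE NmE.
Qed.

Lemma card_kerf2_le : (#|[set x in U | f2 x == 1%R]| <= q - 1)%N.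
Proof.
apply: leq_trans (card_roots (_ : 0 < q - 1)%N); last by rewrite subn_gt0.
apply: subset_leq_card; apply/subsetP => t; rewrite !inE => /andP[t0 /eqP e].
rewrite t0 /=; apply/eqP; apply: (mulIf t0); rewrite mul1r -exprSr subn1 prednK; last by case: (q) q_gt1.
by rewrite -{2}(divfK (expf_neq0 q t0) t) -/(f2 t) e mul1r.
Qed.

Lemma Imf2_sub : f2 @: U \subset KN.
Proof.
apply/subsetP => y /imsetP[t]; rewrite inU => t0 ->. by rewrite /KN !inE f2_neq0 ?Nm_f2 ?eqxx.
Qed.

Lemma cards_eq : #|ImN| = (q - 1)%N /\ #|KN| = (q ^ 2 + q + 1)%N /\ f2 @: U = KN.
Proof.
have h1 := hom_count NmM Nm_neq0.
have h2 := hom_count f2M f2_neq0.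
have c1 := card_ImN_le; have c2 := card_KN_le; have c3 := card_kerf2_le.
have c4 := subset_leq_card Imf2_sub.
rewrite cardU3 in h1 h2.
have qp : (0 < q - 1)%N by rewrite subn_gt0.
have np : (0 < q ^ 2 + q + 1)%N by rewrite addn1.
have [ea eb] := prod_eq qp np c1 c2 h1.
rewrite mulnC in h2.
have [ec _] := prod_eq np qp (leq_trans c4 c2) c3 h2.
split=> //; split=> //; apply/eqP; rewrite eqEcard Imf2_sub /=.
by rewrite ec eb.
Qed.

Definition Cn (n : F) := [set Xp s | s in [set s in U | Nm s == n]].
Definition Dn (n : F) := [set Yl s | s in [set s in U | Nm s == n]].

Lemma Xp_inj : injective Xp.
Proof.
move=> s s' /pt_eq [a a0]; rewrite /scalev /= => -[e1 e2].
by move: e1; rewrite mulr1 in e2; rewrite -e2 mul1r.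
Qed.

Lemma Yl_inj : injective Yl.
Proof.
move=> s s' /pt_eq [a a0]; rewrite /scalev /= => -[e1 e2].
rewrite mulr1 in e1; rewrite -e1 mul1r in e2; by move/oppr_inj: e2.
Qed.

Lemma psisX r t : t != 0 -> [set psiv q t v | v in Xp r] = Xp (r * f2 t).
Proof.
move=> t0; rewrite /Xp psis_pt; apply/esym; rewrite -(pt_scale _ (expf_neq0 q t0)); congr pt.
rewrite /psiv /scalev /= /f2 !mulr0 !mulr1; congr (_, _, _).
by rewrite [r * _]mulrC mulrA [t ^+ q * _]mulrC divfK ?expf_neq0.
Qed.

Lemma ST_X r : r != 0 -> ST_orbit q (Xp r) = Cn (Nm r).
Proof.
move=> r0; have [_ [_ eK]] := cards_eq.
apply/setP => X; apply/imsetP/imsetP.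
  case=> t; rewrite inE => t0 ->; rewrite psisX //; exists (r * f2 t) => //.
  by rewrite inE inU mulf_neq0 ?f2_neq0 //= NmM Nm_f2 // mulr1.
case=> s; rewrite inE inU => /andP[s0 /eqP e] ->.
have hsr : Nm (s / r) = 1.
  by apply: (mulIf (Nm_neq0 r0)); rewrite -NmM divfK // mul1r.
have : s / r \in f2 @: U by rewrite eK /KN inE inU mulf_neq0 ?invr_eq0 //= hsr.
case/imsetP => t; rewrite inU => t0 et; exists t; first by rewrite inE.
by rewrite psisX // -et mulrC divfK.
Qed.

Lemma card_Cn r : r != 0 -> #|Cn (Nm r)| = (q ^ 2 + q + 1)%N.
Proof.
move=> r0; have [_ [cK _]] := cards_eq.
rewrite /Cn card_imset; last exact: Xp_inj.
rewrite (fiber NmM Nm_neq0 r0) card_imset; last exact: mulfI.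
by rewrite -cK.
Qed.

Lemma incident_mT (v : vec F) : incident (pt v) (mT F) = (v.2 == 0).
Proof. by rewrite /mT incident_pt /dot /= !mulr0 !add0r mulr1. Qed.

Lemma deg_orbit (v : vec F) :
  (forall t, t != 0 -> exists2 c, c != 0 & psiv q t v = scalev c v) ->
  (#|ST_orbit q (pt v)| <= 1)%N.
Proof.
move=> H; rewrite -(cards1 (pt v)); apply: subset_leq_card; apply/subsetP => X.
case/imsetP => t; rewrite inE => t0 ->; rewrite psis_pt.
by case: (H t t0) => c c0 ->; rewrite pt_scale // inE.
Qed.

Lemma Tsls_eq : Tsls F q = Cn @: ImN.
Proof.
apply/setP => O; rewrite inE; apply/idP/imsetP.
  case/andP => /andP[/existsP[P /andP[/is_ptP[v v0 ->] /eqP eO]] /eqP cO] /forallP allI.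
  have Pin : pt v \in O.
    rewrite eO; apply/imsetP; exists 1; first by rewrite inE oner_neq0.
    rewrite psis_pt; congr pt; case: v {v0 eO cO allI} => [[a b] c].
    by rewrite /psiv /= !expr1n !mul1r.
  have := allI (pt v); rewrite Pin incident_mT /= => /eqP vz.
  move: v v0 vz eO Pin cO => [[a b] c] v0 /= vz; subst c => eO Pin cO.
  have big1 : (1 < q ^ 2 + q + 1)%N by rewrite addn1 ltnS addn_gt0; case: (q) q_gt1.
  case: (eqVneq a 0) => a0.
    subst a; have : (#|ST_orbit q (pt (0%R, b, 0%R))| <= 1)%N.
      apply: deg_orbit => t t0; exists (t ^+ q); first by rewrite expf_neq0.
      by rewrite /psiv /scalev /= !mulr0.
    by rewrite -eO cO leqNgt big1.
  case: (eqVneq b 0) => b0.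
    subst b; have : (#|ST_orbit q (pt (a, 0%R, 0%R))| <= 1)%N.
      apply: deg_orbit => t t0; exists t => //.
      by rewrite /psiv /scalev /= !mulr0.
    by rewrite -eO cO leqNgt big1.
  exists (Nm (a / b)).
    by apply/imsetP; exists (a / b); rewrite // inU mulf_neq0 ?invr_eq0.
  have e : pt (a, b, 0) = Xp (a / b).
    rewrite /Xp; apply/esym; rewrite -(pt_scale _ b0); congr pt.
    by rewrite /scalev /= mulr0 mulr1 mulrC divfK.
  by rewrite eO e ST_X // mulf_neq0 ?invr_eq0.
case=> n /imsetP[r]; rewrite inU => r0 -> ->.
rewrite -ST_X //; apply/andP; split; first (apply/andP; split).
- apply/existsP; exists (Xp r); rewrite eqxx andbT; apply/is_ptP; exists (r, 1, 0) => //.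
  by apply/eqP => -[] _ /eqP; rewrite oner_eq0.
- by rewrite ST_X // card_Cn.
- apply/forallP => X; apply/implyP; rewrite ST_X // => /imsetP[s _ ->].
  by rewrite /Xp incident_mT.
Qed.

Lemma Tpencil_C n : Tpencil (Cn n) = Dn n.
Proof.
apply/setP => L; rewrite inE; apply/idP/imsetP.
  case/and3P => /is_ptP[l l0 ->] hT /existsP[X /andP[/imsetP[s sin ->] hX]].
  move: l l0 hT hX => [[a b] c] l0; rewrite /T incident_pt /Xp incident_pt /dot /=.
  rewrite !mul0r !add0r !mul1r addr0 => /eqP hc hb.
  subst c; exists s => //.
  have eb : b = - (s * a) by apply/eqP; rewrite -addr_eq0 addrC.
  have a0 : a != 0.
    by apply: contraNneq l0 => a0; rewrite eb a0 mulr0 oppr0.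
  rewrite /Yl; apply/esym; rewrite -(pt_scale _ a0); congr pt.
  by rewrite /scalev /= mulr1 mulr0 eb mulrN mulrC.
case=> s sin ->; apply/and3P; split.
- apply/is_ptP; exists (1, - s, 0) => //.
  by apply/eqP => -[] /eqP; rewrite oner_eq0.
- by rewrite /T /Yl incident_pt /dot /= !mul0r mulr0 !addr0.
- apply/existsP; exists (Xp s); rewrite imset_f //=.
  by rewrite /Xp /Yl incident_pt /dot /= mulr1 mul1r mulr0 addr0 addrN eqxx.
Qed.

Lemma forall_img (G : F -> {set vec F}) (tp : pred {set vec F}) (R : pred F) n :
  n \in ImN -> (forall s, s != 0 -> tp (G s) = R (Nm s)) ->
  [forall L in [set G s | s in [set s in U | Nm s == n]], tp L] = R n.
Proof.
case/imsetP => r; rewrite inU => r0 -> H; apply/forallP/idP.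
  by move/(_ (G r)); rewrite imset_f ?inE ?inU ?r0 ?eqxx //= H.
move=> HR L; apply/implyP => /imsetP[s]; rewrite inE inU => /andP[s0 /eqP e] ->.
by rewrite H // e.
Qed.

Lemma Dn_inj : {in ImN &, injective Dn}.
Proof.
move=> n n' /imsetP[r]; rewrite inU => r0 -> hn' e.
have : Yl r \in Dn n' by rewrite -e imset_f // inE inU r0 eqxx.
case/imsetP => s; rewrite inE => /andP[_ /eqP es] /Yl_inj ->.
by rewrite es.
Qed.

Lemma pencil_set (P : pred {set {set vec F}}) :
  [set Tpencil S | S in Tsls F q & P S] = [set Dn n | n in ImN & P (Cn n)].
Proof.
apply/setP => L; apply/imsetP/imsetP.
  case=> S; rewrite inE => /andP[]; rewrite Tsls_eq => /imsetP[n nI ->] hP ->.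
  by exists n; [rewrite inE nI | rewrite Tpencil_C].
case=> n; rewrite inE => /andP[nI hP] ->.
by exists (Cn n); [rewrite inE Tsls_eq imset_f | rewrite Tpencil_C].
Qed.

Lemma pencil_set0 : [set Tpencil S | S in Tsls F q] = Dn @: ImN.
Proof.
apply/setP => L; apply/imsetP/imsetP.
  case=> S; rewrite Tsls_eq => /imsetP[n nI ->] ->.
  by exists n; rewrite // Tpencil_C.
case=> n nI ->.
by exists (Cn n); [rewrite Tsls_eq imset_f | rewrite Tpencil_C].
Qed.

Lemma tIIp n : n \in ImN -> typeII_pencil q (Dn n) = (n == 1).
Proof. by move=> nI; apply: (forall_img (R := fun n => n == 1)) => // s _; case: (typeY s). Qed.
Lemma tIIIp n : n \in ImN -> typeIII_pencil q (Dn n) = (n != 1).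
Proof. by move=> nI; apply: (forall_img (R := fun n => n != 1)) => // s _; case: (typeY s). Qed.
Lemma tIIs n : n \in ImN -> typeII_sls q (Cn n) = (n == -1).
Proof. by move=> nI; apply: (forall_img (R := fun n => n == -1)) => // s _; case: (typeX s). Qed.
Lemma tIIIs n : n \in ImN -> typeIII_sls q (Cn n) = (n != -1).
Proof. by move=> nI; apply: (forall_img (R := fun n => n != -1)) => // s _; case: (typeX s). Qed.

Lemma card_sub (R : pred F) : #|[set Dn n | n in ImN & R n]| = #|[set n in ImN | R n]|.
Proof.
rewrite card_in_imset //; move=> x y; rewrite !inE => /andP[xI _] /andP[yI _].
exact: Dn_inj.
Qed.

Lemma one_ImN : 1 \in ImN.
Proof. by apply/imsetP; exists 1; rewrite ?inU ?oner_neq0 // /Nm !expr1n !mulr1. Qed.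

Lemma m1_ImN : -1 \in ImN.
Proof.
apply/imsetP; exists (-1); rewrite ?inU ?oppr_eq0 ?oner_neq0 //.
by rewrite /Nm -expqq !hm1 mulrNN !mul1r.
Qed.

Lemma pencil_gen (P : pred {set {set vec F}}) (R : pred F) :
  (forall n, n \in ImN -> P (Cn n) = R n) ->
  #|[set Tpencil S | S in Tsls F q & P S]| = #|[set n in ImN | R n]|.
Proof.
move=> H; rewrite pencil_set (card_sub (fun n => P (Cn n))); apply: eq_card => n; rewrite !inE; case nI: (n \in ImN) => //=; rewrite ?H //.
Qed.

Lemma main_sec (ev : ~~ odd q -> (1 : F) = -1) (od : odd q -> (1 : F) != -1) :
  #|[set Tpencil S | S in Tsls F q]| = (q - 1)%N /\
  #|[set Tpencil S | S in Tsls F q & typeII_pencil q (Tpencil S)]| = 1%N /\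
  #|[set Tpencil S | S in Tsls F q & typeIII_pencil q (Tpencil S)]| = (q - 2)%N /\
  (~~ odd q ->
     forall S, S \in Tsls F q ->
       (typeII_pencil q (Tpencil S) -> typeII_sls q S) /\
       (typeIII_pencil q (Tpencil S) -> typeIII_sls q S)) /\
  (odd q ->
     (forall S, S \in Tsls F q ->
        typeII_pencil q (Tpencil S) -> typeIII_sls q S) /\
     #|[set Tpencil S | S in Tsls F q &
          typeIII_pencil q (Tpencil S) && typeII_sls q S]| = 1%N /\
     #|[set Tpencil S | S in Tsls F q &
          typeIII_pencil q (Tpencil S) && typeIII_sls q S]| = (q - 3)%N).
Proof.
have [cI _] := cards_eq.
have o1 := one_ImN; have m1 := m1_ImN.
have cD1 : #|ImN :\ 1| = (q - 2)%N.
  move: (cardsD1 1 ImN); rewrite o1 cI /= => e; by rewrite -(addKn 1 #|ImN :\ 1|) -e -subnDA.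
split.
  by rewrite pencil_set0 card_in_imset ?cI //; apply: Dn_inj.
split.
  rewrite (pencil_gen (R := fun n => n == 1)); last by move=> n nI; rewrite Tpencil_C tIIp.
  rewrite -(cards1 (1 : F)); apply: eq_card => n; rewrite !inE.
  by case: (eqVneq n 1) => [->|]; rewrite ?o1 ?andbF.
split.
  rewrite (pencil_gen (R := fun n => n != 1)); last by move=> n nI; rewrite Tpencil_C tIIIp.
  rewrite -cD1; apply: eq_card => n; rewrite !inE andbC.
  by [].
split.
  move=> e S; rewrite Tsls_eq => /imsetP[n nI ->]; rewrite Tpencil_C tIIp // tIIIp // tIIs // tIIIs //.
  by rewrite -(ev e); split.
move=> oq; have d := od oq; split.
  move=> S; rewrite Tsls_eq => /imsetP[n nI ->]; rewrite Tpencil_C tIIp // tIIIs //.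
  by move/eqP ->.
split.
  rewrite (pencil_gen (R := fun n => (n != 1) && (n == -1))); last first.
    by move=> n nI; rewrite Tpencil_C tIIIp // tIIs.
  rewrite -(cards1 (-1 : F)); apply: eq_card => n; rewrite !inE.
  case: (eqVneq n (-1)) => [->|]; last by rewrite !andbF.
  by rewrite m1 eq_sym d.
rewrite (pencil_gen (R := fun n => (n != 1) && (n != -1))); last first.
  by move=> n nI; rewrite Tpencil_C tIIIp // tIIIs.
have : #|ImN :\ 1 :\ -1| = (q - 3)%N.
  move: (cardsD1 (-1) (ImN :\ 1)); rewrite !inE eq_sym d m1 cD1 /= => e; by rewrite -(addKn 1 #|ImN :\ 1 :\ -1|) -e -subnDA.
move=> <-; apply: eq_card => n; rewrite !inE.
by case: (n \in ImN); case: (n != 1); case: (n != -1).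
Qed.
End Q.

Theorem corollary2p4 (F : finFieldType) (q : nat)
  (hq : exists p k : nat, [/\ prime p, (0 < k)%N & q = (p ^ k)%N])
  (hF : #|F| = (q ^ 3)%N) :
  (* there are q-1 T-sls-pencils *)
  #|[set Tpencil S | S in Tsls F q]| = (q - 1)%N /\
  #|[set Tpencil S | S in Tsls F q & typeII_pencil q (Tpencil S)]| = 1%N /\
  #|[set Tpencil S | S in Tsls F q & typeIII_pencil q (Tpencil S)]| = (q - 2)%N /\
  (~~ odd q ->
     forall S, S \in Tsls F q ->
       (typeII_pencil q (Tpencil S) -> typeII_sls q S) /\
       (typeIII_pencil q (Tpencil S) -> typeIII_sls q S)) /\
  (odd q ->
     (forall S, S \in Tsls F q ->
        typeII_pencil q (Tpencil S) -> typeIII_sls q S) /\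
     #|[set Tpencil S | S in Tsls F q &
          typeIII_pencil q (Tpencil S) && typeII_sls q S]| = 1%N /\
     #|[set Tpencil S | S in Tsls F q &
          typeIII_pencil q (Tpencil S) && typeIII_sls q S]| = (q - 3)%N).
Proof.
case: hq => p [k [pp k0 qe]].
have q_gt1 : (1 < q)%N.
  rewrite qe; have p1 := prime_gt1 pp; case: k k0 {qe} => // k _.
  rewrite expnS; have := expn_gt0 p k; rewrite (prime_gt0 pp) => h.
  by apply: (leq_trans p1); rewrite leq_pmulr.
have ev : ~~ odd q -> (1 : F) = -1.
  move=> e; have := expf_card (-1 : F).
  by rewrite hF -signr_odd oddX /= (negbTE e) expr0.
have hm1 : (-1 : F) ^+ q = -1.
  rewrite -signr_odd; case: (boolP (odd q)) => h; first by rewrite expr1.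
  by rewrite expr0; apply: ev.
have od : odd q -> (1 : F) != -1.
  move=> oq; apply/negP => /eqP e.
  have c2 : (2 \in [char F])%R.
    apply/andP; split => //; apply/eqP.
    by rewrite mulr2n {1}e addNr.
  have cp : (p \in [char F])%R.
    by apply: (card_finPcharP (n := (k * 3)%N)) => //; rewrite hF qe -expnM.
  have := pcharf_eq cp 2; rewrite c2 => /esym h2.
  move: h2; rewrite inE => /eqP p2.
  by move: oq; rewrite qe -p2 oddX /= orbF; case: (k) k0.
exact: (main_sec hF q_gt1 hm1 ev od).
Qed.
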